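(* Let $S$ be a functional PTS specification. For any $\lambda\Pi/S$ context $\Gamma$ and any $\Gamma$-term $M$ of $\lambda\Pi/S$ (i.e. $\mathrm{WF}_{\lambda\Pi/S}(\Gamma)$ and $\Gamma\vdash_{\lambda\Pi/S}M:A$ for some $A$), there is a term $M^-$ of $\lambda\Pi^-/S$ such that $M\longrightarrow_\beta^* M^-$.
   Context: $\lambda\Pi$ is the PTS with sorts $\mathsf{Type},\mathsf{Kind}$, axiom $\mathsf{Type}:\mathsf{Kind}$ and rules $(\mathsf{Type},\mathsf{Type}),(\mathsf{Type},\mathsf{Kind})$ (terms $s\mid x\mid M\,N\mid\lambda x:A.M\mid\Pi x:A.B$, standard PTS typing rules). Given a well-formed $\lambda\Pi$ context $\Sigma$ and rewrite rules $R$, $\lambda\Pi/(\Sigma,R)$ has the $\lambda\Pi$ typing rules except that variables may also be declared in $\Sigma$ (and new declarations must avoid $\Sigma$) and conversion is modulo $\equiv_{\beta R}$, the congruence generated by $\beta$-reduction and the rewrite rules. For a PTS specification $S=(\mathcal S,\mathcal A,\mathcal R)$, $\lambda\Pi/S=\lambda\Pi/(\Sigma_S,R_S)$ where $\Sigma_S$ declares $u_s:\mathsf{Type}$, $\varepsilon_s:u_s\to\mathsf{Type}$ ($s\in\mathcal S$), $\dot s_1:u_{s_2}$ ($(s_1:s_2)\in\mathcal A$), $\dot\pi_{s_1s_2s_3}:\Pi\alpha:u_{s_1}.(\varepsilon_{s_1}\alpha\to u_{s_2})\to u_{s_3}$ ($(s_1,s_2,s_3)\in\mathcal R$), and $R_S$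 consists of $\varepsilon_{s_2}\dot s_1\leadsto u_{s_1}$ for $(s_1:s_2)\in\mathcal A$ and $\varepsilon_{s_3}(\dot\pi_{s_1s_2s_3}AB)\leadsto\Pi x:\varepsilon_{s_1}A.\,\varepsilon_{s_2}(B\,x)$ for $(s_1,s_2,s_3)\in\mathcal R$. A $\Gamma$-term $P$ of type $C$ is at the level of $\mathsf{Kind}$ if $\Gamma\vdash C:\mathsf{Kind}$. A $\mathsf{Kind}$-level $\beta$-redex is a subterm $(\lambda x:B.C)\,P$ at the level of $\mathsf{Kind}$ (in its typing context). The $\lambda\Pi^-/S$ terms are the well-typed $\lambda\Pi/S$ terms that contain no $\mathsf{Kind}$-level $\beta$-redex. *)

(* Defs.v *)
From Stdlib Require Import List Arith Relations.
Import ListNotations.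

Section LambdaPiModulo.

(* A PTS specification S = (sorts, axioms, rules). *)
Variable srt : Type.
Variable ax : srt -> srt -> Prop.
Variable rl : srt -> srt -> srt -> Prop.

Definition functional_spec : Prop :=
  (forall s1 s2 s2', ax s1 s2 -> ax s1 s2' -> s2 = s2') /\
  (forall s1 s2 s3 s3', rl s1 s2 s3 -> rl s1 s2 s3' -> s3 = s3').

Inductive const : Type :=
| Cu (s : srt)
| Ceps (s : srt)
| Cdot (s1 s2 : srt)
| Cpi (s1 s2 s3 : srt).

Inductive term : Type :=
| tType
| tKind
| tVar (n : nat)
| tConst (c : const)
| tApp (M N : term)
| tLam (A M : term)
| tPi (A B : term).

Fixpoint lift (k n : nat) (t : term) : term :=
  match t with
  | tType => tType
  | tKind => tKind
  | tVar i => if Nat.leb k i then tVar (i + n) else tVar i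
  | tConst c => tConst c
  | tApp M N => tApp (lift k n M) (lift k n N)
  | tLam A M => tLam (lift k n A) (lift (S k) n M)
  | tPi A B => tPi (lift k n A) (lift (S k) n B)
  end.

(* subst_rec u t k = t[k := u] (with u lifted under binders, free vars above k lowered) *)
Fixpoint subst_rec (u t : term) (k : nat) : term :=
  match t with
  | tType => tType
  | tKind => tKind
  | tVar i =>
      if Nat.ltb i k then tVar i
      else if Nat.eqb i k then lift 0 k u
      else tVar (i - 1)
  | tConst c => tConst c
  | tApp M N => tApp (subst_rec u M k) (subst_rec u N k)
  | tLam A M => tLam (subst_rec u A k) (subst_rec u M (S k))
  | tPi A B => tPi (subst_rec u A k) (subst_rec u B (S k))
  end.

Definition subst (t u : term) : term := subst_rec u t 0.

Inductive head_beta : term -> term -> Prop :=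
| hb_beta : forall A M N, head_beta (tApp (tLam A M) N) (subst M N).

Inductive head_R : term -> term -> Prop :=
| hR_ax : forall s1 s2, ax s1 s2 ->
    head_R (tApp (tConst (Ceps s2)) (tConst (Cdot s1 s2))) (tConst (Cu s1))
| hR_rl : forall s1 s2 s3 A B, rl s1 s2 s3 ->
    head_R (tApp (tConst (Ceps s3)) (tApp (tApp (tConst (Cpi s1 s2 s3)) A) B))
           (tPi (tApp (tConst (Ceps s1)) A)
                (tApp (tConst (Ceps s2)) (tApp (lift 0 1 B) (tVar 0)))).

Inductive ctx_clos (r : term -> term -> Prop) : term -> term -> Prop :=
| cc_root : forall M N, r M N -> ctx_clos r M N
| cc_appl : forall M M' N, ctx_clos r M M' -> ctx_clos r (tApp M N) (tApp M' N)
| cc_appr : forall M N N', ctx_clos r N N' -> ctx_clos r (tApp M N) (tApp M N')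
| cc_laml : forall A A' M, ctx_clos r A A' -> ctx_clos r (tLam A M) (tLam A' M)
| cc_lamr : forall A M M', ctx_clos r M M' -> ctx_clos r (tLam A M) (tLam A M')
| cc_pil : forall A A' B, ctx_clos r A A' -> ctx_clos r (tPi A B) (tPi A' B)
| cc_pir : forall A B B', ctx_clos r B B' -> ctx_clos r (tPi A B) (tPi A B').

Definition beta1 : term -> term -> Prop := ctx_clos head_beta.

Definition beta_star : term -> term -> Prop := clos_refl_trans term beta1.

Definition conv_betaR : term -> term -> Prop :=
  clos_refl_sym_trans term (ctx_clos (fun M N => head_beta M N \/ head_R M N)).

Inductive sig_decl : const -> term -> Prop :=
| sd_u : forall s, sig_decl (Cu s) tType
| sd_eps : forall s, sig_decl (Ceps s) (tPi (tConst (Cu s)) tType)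
| sd_dot : forall s1 s2, ax s1 s2 -> sig_decl (Cdot s1 s2) (tConst (Cu s2))
| sd_pi : forall s1 s2 s3, rl s1 s2 s3 ->
    sig_decl (Cpi s1 s2 s3)
      (tPi (tConst (Cu s1))
           (tPi (tPi (tApp (tConst (Ceps s1)) (tVar 0)) (tConst (Cu s2)))
                (tConst (Cu s3)))).

Definition is_sort (t : term) : Prop := t = tType \/ t = tKind.

(* Contexts: the head of the list is the most recent declaration (index 0). *)
Definition ctx := list term.

Inductive wf : ctx -> Prop :=
| wf_nil : wf []
| wf_cons : forall G A s, typing G A s -> is_sort s -> wf (A :: G)
with typing : ctx -> term -> term -> Prop :=
| ty_sort : forall G, wf G -> typing G tType tKind
| ty_var : forall G n A, wf G -> nth_error G n = Some A ->
    typing G (tVar n) (lift 0 (S n) A)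
| ty_const : forall G c A, wf G -> sig_decl c A -> typing G (tConst c) A
| ty_pi : forall G A B s, typing G A tType -> typing (A :: G) B s -> is_sort s ->
    typing G (tPi A B) s
| ty_lam : forall G A B M s, typing G (tPi A B) s -> typing (A :: G) M B ->
    typing G (tLam A M) (tPi A B)
| ty_app : forall G M N A B, typing G M (tPi A B) -> typing G N A ->
    typing G (tApp M N) (subst B N)
| ty_conv : forall G M A B s, typing G M A -> typing G B s -> is_sort s ->
    conv_betaR A B -> typing G M B.

(* subterm_in G M D N : N is a subterm of M, and D is its typing context
   (G extended with the binders crossed to reach N). *)
Inductive subterm_in : ctx -> term -> ctx -> term -> Prop :=
| st_refl : forall G M, subterm_in G M G M
| st_appl : forall G M N D P, subterm_in G M D P -> subterm_in G (tApp M N) D P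
| st_appr : forall G M N D P, subterm_in G N D P -> subterm_in G (tApp M N) D P
| st_laml : forall G A M D P, subterm_in G A D P -> subterm_in G (tLam A M) D P
| st_lamr : forall G A M D P, subterm_in (A :: G) M D P -> subterm_in G (tLam A M) D P
| st_pil : forall G A B D P, subterm_in G A D P -> subterm_in G (tPi A B) D P
| st_pir : forall G A B D P, subterm_in (A :: G) B D P -> subterm_in G (tPi A B) D P.

Definition kind_level (G : ctx) (P : term) : Prop :=
  exists C, typing G P C /\ typing G C tKind.

Definition has_kind_redex (G : ctx) (M : term) : Prop :=
  exists D B C P, subterm_in G M D (tApp (tLam B C) P) /\
                  kind_level D (tApp (tLam B C) P).

Definition lamPiMinus_term (G : ctx) (M : term) : Prop :=
  (exists A, typing G M A) /\ ~ has_kind_redex G M.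

End LambdaPiModulo.

Arguments tType {srt}.
Arguments tKind {srt}.
Arguments tVar {srt}.
Arguments functional_spec {srt}.
Arguments beta_star {srt}.
Arguments wf {srt}.
Arguments typing {srt}.
Arguments lamPiMinus_term {srt}.
Arguments has_kind_redex {srt}.
Arguments kind_level {srt}.

(* Main.v *)
Require Import Defs.
From Stdlib Require Import List Arith Relations Lia.
Import ListNotations.

Arguments tApp {srt}. Arguments tLam {srt}. Arguments tPi {srt}. Arguments tConst {srt}.
Arguments lift {srt}. Arguments subst_rec {srt}. Arguments subst {srt}.
Arguments Cu {srt}. Arguments Ceps {srt}. Arguments Cdot {srt}. Arguments Cpi {srt}.

Section DB.
Context {srt : Type}.
Notation term := (term srt).

Lemma lift_0 : forall (t : term) k, lift k 0 t = t.
Proof. induction t; intros; simpl; f_equal; auto.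
  destruct (Nat.leb k n); f_equal; lia. Qed.

Lemma simpl_lift : forall (M : term) n k p i, i <= k + n -> k <= i ->
  lift i p (lift k n M) = lift k (p + n) M.
Proof. induction M; intros; cbn [lift subst_rec]; f_equal; auto; try (apply IHM2; lia).
  destruct (Nat.leb k n) eqn:E; simpl.
  - apply Nat.leb_le in E. destruct (Nat.leb i (n+n0)) eqn:E2; [f_equal; lia|]. apply Nat.leb_gt in E2; lia.
  - apply Nat.leb_gt in E. destruct (Nat.leb i n) eqn:E2; [apply Nat.leb_le in E2; lia|]. auto. Qed.

Ltac nb := repeat match goal with
  | H : Nat.leb _ _ = true |- _ => apply Nat.leb_le in H
  | H : Nat.leb _ _ = false |- _ => apply Nat.leb_gt in H
  | H : Nat.ltb _ _ = true |- _ => apply Nat.ltb_lt in H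
  | H : Nat.ltb _ _ = false |- _ => apply Nat.ltb_ge in H
  | H : Nat.eqb _ _ = true |- _ => apply Nat.eqb_eq in H
  | H : Nat.eqb _ _ = false |- _ => apply Nat.eqb_neq in H
  | |- context [Nat.leb ?a ?b] => destruct (Nat.leb a b) eqn:?
  | |- context [Nat.ltb ?a ?b] => destruct (Nat.ltb a b) eqn:?
  | |- context [Nat.eqb ?a ?b] => destruct (Nat.eqb a b) eqn:?
  end.

Lemma permute_lift : forall (M : term) n k p i, i <= k ->
  lift i p (lift k n M) = lift (p + k) n (lift i p M).
Proof. induction M; intros; simpl.
  3: nb; cbn [lift subst_rec]; nb; try lia; f_equal; lia.
  all: f_equal; auto; rewrite IHM2 by lia; f_equal; lia. Qed.

Lemma simpl_subst : forall (N M : term) n p k, p <= n + k -> k <= p ->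
  subst_rec N (lift k (S n) M) p = lift k n M.
Proof. induction M; intros; cbn [lift subst_rec].
  3: nb; cbn [lift subst_rec]; nb; try lia; f_equal; lia.
  all: f_equal; auto; apply IHM2; lia. Qed.

Lemma commut_lift_subst : forall (N M : term) n p k, k <= p ->
  lift k n (subst_rec N M p) = subst_rec N (lift k n M) (n + p).
Proof. induction M; intros; cbn [lift subst_rec].
  3: { nb; cbn [lift subst_rec]; nb; try lia; try (f_equal; lia).
       subst. rewrite simpl_lift by lia. f_equal; lia. }
  all: f_equal; auto; rewrite IHM2 by lia; f_equal; lia. Qed.

Lemma commut_lift_subst2 : forall (N M : term) n p k, p <= k ->
  lift k n (subst_rec N M p) = subst_rec (lift (k - p) n N) (lift (S k) n M) p.
Proof. induction M; intros; cbn [lift subst_rec].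
  3: { nb; cbn [lift subst_rec]; nb; try lia; try (f_equal; lia).
       subst. rewrite (permute_lift _ _ _ _ 0) by lia; f_equal; lia. }
  all: f_equal; auto; rewrite IHM2 by lia; f_equal; f_equal; lia. Qed.

Lemma distr_subst : forall (P N M : term) n p,
  subst_rec P (subst_rec N M p) (p + n) = subst_rec (subst_rec P N n) (subst_rec P M (S (p + n))) p.
Proof. induction M; intros; cbn [lift subst_rec].
  3: { nb; cbn [lift subst_rec]; nb; try lia; try (f_equal; lia).
  - subst. rewrite commut_lift_subst by lia; reflexivity.
  - subst. rewrite simpl_subst by lia; reflexivity. }
  all: f_equal; auto; apply (IHM2 n (S p)). Qed.

End DB.
Arguments head_beta {srt}. Arguments head_R {srt}. Arguments ctx_clos {srt}.
Arguments beta1 {srt}. Arguments conv_betaR {srt}.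

Section CR.
Context {srt : Type} (ax : srt -> srt -> Prop) (rl : srt -> srt -> srt -> Prop).
Notation term := (term srt).

Inductive par : term -> term -> Prop :=
| p_type : par tType tType
| p_kind : par tKind tKind
| p_var : forall n, par (tVar n) (tVar n)
| p_const : forall c, par (tConst c) (tConst c)
| p_app : forall M M' N N', par M M' -> par N N' -> par (tApp M N) (tApp M' N')
| p_lam : forall A A' M M', par A A' -> par M M' -> par (tLam A M) (tLam A' M')
| p_pi : forall A A' M M', par A A' -> par M M' -> par (tPi A M) (tPi A' M')
| p_beta : forall A M M' N N', par M M' -> par N N' -> par (tApp (tLam A M) N) (subst M' N')
| p_ax : forall s1 s2, ax s1 s2 ->
    par (tApp (tConst (Ceps s2)) (tConst (Cdot s1 s2))) (tConst (Cu s1))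
| p_rl : forall s1 s2 s3 A A' B B', rl s1 s2 s3 -> par A A' -> par B B' ->
    par (tApp (tConst (Ceps s3)) (tApp (tApp (tConst (Cpi s1 s2 s3)) A) B))
        (tPi (tApp (tConst (Ceps s1)) A')
             (tApp (tConst (Ceps s2)) (tApp (lift 0 1 B') (tVar 0)))).

Hint Constructors par : core.

Lemma par_refl : forall M, par M M.
Proof. induction M; auto. Qed.
Hint Resolve par_refl : core.

Lemma par_lift : forall M M', par M M' -> forall k n, par (lift k n M) (lift k n M').
Proof. induction 1; intros; cbn [lift]; auto.
  - unfold subst; rewrite (commut_lift_subst2 N' M' n 0 k) by lia. rewrite Nat.sub_0_r. apply p_beta; auto.
  - replace (lift (S k) n (lift 0 1 B')) with (lift 0 1 (lift k n B')) by (rewrite (permute_lift B' n k 1 0) by lia; reflexivity). simpl Nat.leb. cbv iota. apply p_rl; auto. Qed.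

Lemma par_subst : forall M M', par M M' -> forall N N', par N N' -> forall k,
  par (subst_rec N M k) (subst_rec N' M' k).
Proof. induction 1; intros; cbn [subst_rec]; auto.
  - destruct (Nat.ltb n k); auto. destruct (Nat.eqb n k); auto. apply par_lift; auto.
  - unfold subst. pose proof (distr_subst N'0 N' M' k 0) as E; simpl in E; rewrite E. apply p_beta; auto.
  - pose proof (commut_lift_subst N' B' 1 k 0) as E; simpl in E; rewrite <- E by lia. simpl Nat.ltb. cbv iota. apply p_rl; auto. Qed.

Lemma par_app_inv : forall M N X, par (tApp M N) X ->
  (exists M' N', X = tApp M' N' /\ par M M' /\ par N N') \/
  (exists A M0 M0' N', M = tLam A M0 /\ X = subst M0' N' /\ par M0 M0' /\ par N N') \/
  (exists s1 s2, ax s1 s2 /\ M = tConst (Ceps s2) /\ N = tConst (Cdot s1 s2) /\ X = tConst (Cu s1)) \/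
  (exists s1 s2 s3 A A' B B', rl s1 s2 s3 /\ M = tConst (Ceps s3) /\
     N = tApp (tApp (tConst (Cpi s1 s2 s3)) A) B /\ par A A' /\ par B B' /\
     X = tPi (tApp (tConst (Ceps s1)) A')
             (tApp (tConst (Ceps s2)) (tApp (lift 0 1 B') (tVar 0)))).
Proof. intros. inversion H; subst.
  - left; eauto.
  - right; left; eauto 10.
  - right; right; left; eauto 10.
  - right; right; right; eauto 20. Qed.

Lemma par_const_inv : forall c X, par (tConst c) X -> X = tConst c.
Proof. intros. inversion H; auto. Qed.
Lemma par_lam_inv : forall A M X, par (tLam A M) X ->
  exists A' M', X = tLam A' M' /\ par A A' /\ par M M'.
Proof. intros. inversion H; subst; eauto. Qed.
Lemma par_pi_inv : forall A M X, par (tPi A M) X ->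
  exists A' M', X = tPi A' M' /\ par A A' /\ par M M'.
Proof. intros. inversion H; subst; eauto. Qed.

Lemma par_piapp_inv : forall s1 s2 s3 A B X,
  par (tApp (tApp (tConst (Cpi s1 s2 s3)) A) B) X ->
  exists A' B', X = tApp (tApp (tConst (Cpi s1 s2 s3)) A') B' /\ par A A' /\ par B B'.
Proof. intros. apply par_app_inv in H.
  destruct H as [(M'&N'&->&H1&H2)|[(?&?&?&?&E&_)|[(?&?&?&E&_)|(?&?&?&?&?&?&?&?&E&_)]]];
   try discriminate.
  apply par_app_inv in H1.
  destruct H1 as [(M''&N''&->&H3&H4)|[(?&?&?&?&E&_)|[(?&?&?&E&_)|(?&?&?&?&?&?&?&?&E&_)]]];
   try discriminate.
  apply par_const_inv in H3. subst. eauto. Qed.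

Lemma par_diamond : forall M M1, par M M1 -> forall M2, par M M2 ->
  exists M3, par M1 M3 /\ par M2 M3.
Proof.
  induction 1; intros M2 HM2.
  - inversion HM2; eauto.
  - inversion HM2; eauto.
  - inversion HM2; eauto.
  - inversion HM2; eauto.
  - apply par_app_inv in HM2.
    destruct HM2 as [(M2'&N2'&->&H1&H2)|[(A0&M0&M0'&N2'&->&->&H1&H2)|[(s1&s2&Hax&->&->&->)|(s1&s2&s3&A&A2&B&B2&Hrl&->&->&HA&HB&->)]]].
    + destruct (IHpar1 _ H1) as (M3&?&?). destruct (IHpar2 _ H2) as (N3&?&?). eauto.
    + apply par_lam_inv in H. destruct H as (A'&M0''&->&HA&HM).
      destruct (IHpar1 (tLam A0 M0')) as (X&HX1&HX2); auto.
      apply par_lam_inv in HX2. destruct HX2 as (A3&M3&->&_&HM3).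
      inversion HX1; subst.
      destruct (IHpar2 _ H2) as (N3&?&?).
      exists (subst M3 N3). split; auto. apply par_subst; auto.
    + apply par_const_inv in H. apply par_const_inv in H0. subst. eauto.
    + apply par_const_inv in H. subst.
      apply par_piapp_inv in H0. destruct H0 as (A1&B1&->&HA1&HB1).
      destruct (IHpar2 (tApp (tApp (tConst (Cpi s1 s2 s3)) A2) B2)) as (X&HX1&HX2); auto.
      apply par_piapp_inv in HX2. destruct HX2 as (A3&B3&->&HA3&HB3).
      apply par_piapp_inv in HX1. destruct HX1 as (A4&B4&E&HA4&HB4). injection E; intros; subst.
      eexists; split; [apply p_rl; eauto|]. repeat constructor; auto. apply par_lift; auto.
  - apply par_lam_inv in HM2. destruct HM2 as (A2&M2'&->&HA&HM).
    destruct (IHpar1 _ HA) as (?&?&?). destruct (IHpar2 _ HM) as (?&?&?). eauto.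
  - apply par_pi_inv in HM2. destruct HM2 as (A2&M2'&->&HA&HM).
    destruct (IHpar1 _ HA) as (?&?&?). destruct (IHpar2 _ HM) as (?&?&?). eauto.
  - apply par_app_inv in HM2.
    destruct HM2 as [(M2'&N2'&->&H1&H2)|[(A0&M0&M0'&N2'&E&->&H1&H2)|[(s1&s2&Hax&E&_)|(s1&s2&s3&A1&A2&B&B2&Hrl&E&_)]]]; try discriminate.
    + apply par_lam_inv in H1. destruct H1 as (A'&M0''&->&HA&HM).
      destruct (IHpar1 _ HM) as (?&?&?). destruct (IHpar2 _ H2) as (?&?&?).
      exists (subst x x0). split; [apply par_subst; auto| apply p_beta; auto].
    + injection E; intros; subst.
      destruct (IHpar1 _ H1) as (?&?&?). destruct (IHpar2 _ H2) as (?&?&?).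
      exists (subst x x0). split; apply par_subst; auto.
  - apply par_app_inv in HM2.
    destruct HM2 as [(M2'&N2'&->&H1&H2)|[(A0&M0&M0'&N2'&E&_)|[(s1'&s2'&Hax&E1&E2&->)|(s1'&s2'&s3&A1&A2&B&B2&Hrl&E&E2&_)]]]; try discriminate.
    + apply par_const_inv in H1. apply par_const_inv in H2. subst. eauto.
    + injection E1; injection E2; intros; subst. eauto.
  - apply par_app_inv in HM2.
    destruct HM2 as [(M2'&N2'&->&Q1&Q2)|[(A0&M0&M0'&N2'&E&_)|[(s1'&s2'&Hax&E1&E2&->)|(s1'&s2'&s3'&A1&A2&B1&B2&Hrl&E1&E2&HA&HB&->)]]]; try discriminate.
    + apply par_const_inv in Q1. subst.
      apply par_piapp_inv in Q2. destruct Q2 as (A3&B3&->&HA3&HB3).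
      destruct (IHpar1 _ HA3) as (A4&?&?). destruct (IHpar2 _ HB3) as (B4&?&?).
      exists (tPi (tApp (tConst (Ceps s1)) A4) (tApp (tConst (Ceps s2)) (tApp (lift 0 1 B4) (tVar 0)))).
      split; [repeat constructor; auto; apply par_lift; auto| apply p_rl; auto].
    + injection E2; intros; subst.
      destruct (IHpar1 _ HA) as (A4&?&?). destruct (IHpar2 _ HB) as (B4&?&?).
      exists (tPi (tApp (tConst (Ceps s1')) A4) (tApp (tConst (Ceps s2')) (tApp (lift 0 1 B4) (tVar 0)))).
      split; repeat constructor; auto; apply par_lift; auto.
Qed.


End CR.

Section CR2.
Context {srt : Type} (ax : srt -> srt -> Prop) (rl : srt -> srt -> srt -> Prop).
Notation term := (term srt).
Definition rr (M N : term) := head_beta M N \/ head_R ax rl M N.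
Definition red1 := ctx_clos rr.
Definition red := clos_refl_trans term red1.
Notation par := (par ax rl).

Lemma red1_par : forall M N, red1 M N -> par M N.
Proof. induction 1; try (constructor; auto using par_refl; fail).
  destruct H as [H|H]; inversion H; subst; constructor; auto using par_refl. Qed.

Lemma red_app : forall M M' N N', red M M' -> red N N' -> red (tApp M N) (tApp M' N').
Proof. intros. apply rt_trans with (tApp M' N).
  - induction H; eauto using rt_refl, rt_trans. apply rt_step; constructor 2; auto.
  - induction H0; eauto using rt_refl, rt_trans. apply rt_step; constructor 3; auto. Qed.
Lemma red_lam : forall M M' N N', red M M' -> red N N' -> red (tLam M N) (tLam M' N').
Proof. intros. apply rt_trans with (tLam M' N).
  - induction H; eauto using rt_refl, rt_trans. apply rt_step; constructor 4; auto.
  - induction H0; eauto using rt_refl, rt_trans. apply rt_step; constructor 5; auto. Qed.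
Lemma red_pi : forall M M' N N', red M M' -> red N N' -> red (tPi M N) (tPi M' N').
Proof. intros. apply rt_trans with (tPi M' N).
  - induction H; eauto using rt_refl, rt_trans. apply rt_step; constructor 6; auto.
  - induction H0; eauto using rt_refl, rt_trans. apply rt_step; constructor 7; auto. Qed.

Lemma red_root : forall M N, rr M N -> red M N.
Proof. intros; apply rt_step; constructor; auto. Qed.

Lemma par_red : forall M N, par M N -> red M N.
Proof. induction 1.
  all: try (apply rt_refl).
  all: try (apply red_app; auto; fail). all: try (apply red_lam; auto; fail). all: try (apply red_pi; auto; fail).
  - eapply rt_trans. apply red_app. apply red_lam. apply rt_refl. eauto. eauto.
    apply red_root. left. constructor.
  - apply red_root. right. constructor; auto.
  - eapply rt_trans. apply red_app. apply rt_refl. apply red_app. apply red_app. apply rt_refl. eauto. eauto.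
    apply red_root. right. constructor; auto. Qed.

Lemma par_strip : forall M N, par M N -> forall P, clos_refl_trans term par M P ->
  exists Q, clos_refl_trans term par N Q /\ par P Q.
Proof. intros M N H P H2. revert N H. apply clos_rt_rt1n in H2. induction H2; intros.
  - exists N; split; auto using rt_refl.
  - destruct (par_diamond ax rl _ _ H _ H0) as (Q&?&?).
    destruct (IHclos_refl_trans_1n _ H1) as (R&?&?).
    exists R; split; auto. eapply rt_trans; [apply rt_step|]; eauto. Qed.

Lemma red_parstar : forall M N, red M N -> clos_refl_trans term par M N.
Proof. induction 1; eauto using rt_refl, rt_trans, rt_step, red1_par. Qed.
Lemma parstar_red : forall M N, clos_refl_trans term par M N -> red M N.
Proof. induction 1. apply par_red; auto. apply rt_refl. eapply rt_trans; eauto. Qed.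

Lemma confluence : forall M N P, red M N -> red M P -> exists Q, red N Q /\ red P Q.
Proof. intros. apply red_parstar in H. apply red_parstar in H0.
  revert P H0. apply clos_rt_rt1n in H. induction H; intros.
  - exists P; split. apply parstar_red; auto. apply rt_refl.
  - destruct (par_strip _ _ H _ H1) as (Q&?&?).
    destruct (IHclos_refl_trans_1n _ H2) as (R&?&?).
    exists R; split; auto. eapply rt_trans; [apply par_red|]; eauto. Qed.

Lemma conv_join : forall M N, conv_betaR ax rl M N -> exists Q, red M Q /\ red N Q.
Proof. induction 1.
  - exists y; split. apply rt_step; exact H. apply rt_refl.
  - exists x; split; apply rt_refl.
  - destruct IHclos_refl_sym_trans as (Q&?&?). eauto.
  - destruct IHclos_refl_sym_trans1 as (Q1&?&?). destruct IHclos_refl_sym_trans2 as (Q2&?&?).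
    destruct (confluence _ _ _ H2 H3) as (R&?&?). exists R; split; eapply rt_trans; eauto. Qed.

Lemma red_conv : forall M N, red M N -> conv_betaR ax rl M N.
Proof. induction 1. apply rst_step; exact H. apply rst_refl. eapply rst_trans; eauto. Qed.

Lemma red_pi_inv : forall A B X, red (tPi A B) X -> exists A' B', X = tPi A' B' /\ red A A' /\ red B B'.
Proof. intros. apply clos_rt_rt1n in H. remember (tPi A B) as P. revert A B HeqP.
  induction H; intros; subst.
  - exists A, B; split; [reflexivity|split; apply rt_refl].
  - inversion H; subst.
    + destruct H1 as [H1|H1]; inversion H1.
    + destruct (IHclos_refl_trans_1n A' B eq_refl) as (A2&B2&->&?&?). exists A2, B2; split; [reflexivity|split; [eapply rt_trans; [apply rt_step; eassumption|assumption]|assumption]].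
    + destruct (IHclos_refl_trans_1n A B' eq_refl) as (A2&B2&->&?&?). exists A2, B2; split; [reflexivity|split; [assumption|eapply rt_trans; [apply rt_step; eassumption|assumption]]]. Qed.

Lemma red_kind_inv : forall X, red tKind X -> X = tKind.
Proof. intros. apply clos_rt_rt1n in H. remember tKind as P. induction H; subst; auto.
  inversion H; subst. destruct H1 as [H1|H1]; inversion H1. Qed.
Lemma red_type_inv : forall X, red tType X -> X = tType.
Proof. intros. apply clos_rt_rt1n in H. remember tType as P. induction H; subst; auto.
  inversion H; subst. destruct H1 as [H1|H1]; inversion H1. Qed.

Lemma conv_pi_inj : forall A B A' B', conv_betaR ax rl (tPi A B) (tPi A' B') ->
  conv_betaR ax rl A A' /\ conv_betaR ax rl B B'.
Proof. intros. apply conv_join in H. destruct H as (Q&H1&H2).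
  apply red_pi_inv in H1. apply red_pi_inv in H2.
  destruct H1 as (?&?&->&?&?). destruct H2 as (?&?&E&?&?). injection E; intros; subst.
  split; eapply rst_trans; [apply red_conv; eauto| apply rst_sym, red_conv; eauto|apply red_conv; eauto| apply rst_sym, red_conv; eauto]. Qed.

End CR2.
Arguments typing {srt}. Arguments wf {srt}. Arguments sig_decl {srt}.

Section WC.
Context {srt : Type} (ax : srt -> srt -> Prop) (rl : srt -> srt -> srt -> Prop).
Notation term := (term srt).

Definition cclass (c : const srt) : nat :=
  match c with Cu _ => 1 | Ceps _ => 1 | Cdot _ _ => 0 | Cpi _ _ _ => 0 end.

Inductive wc : list nat -> term -> nat -> Prop :=
| wc_type : forall e, wc e tType 2
| wc_var : forall e n k, nth_error e n = Some k -> wc e (tVar n) k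
| wc_const : forall e c, wc e (tConst c) (cclass c)
| wc_app : forall e M N k, wc e M k -> wc e N 0 -> wc e (tApp M N) k
| wc_lam : forall e A M k, wc e A 1 -> wc (0 :: e) M k -> wc e (tLam A M) k
| wc_pi : forall e A B k, wc e A 1 -> wc (0 :: e) B k -> wc e (tPi A B) k.
Hint Constructors wc : core.

Lemma wc_det : forall e M k, wc e M k -> forall k', wc e M k' -> k = k'.
Proof. induction 1; intros k' H'; inversion H'; subst; auto; congruence. Qed.

Lemma wc_kind : forall e k, ~ wc e tKind k.
Proof. intros e k H; inversion H. Qed.

Lemma wc_lift : forall e M k, wc e M k -> forall e1 e2 e3, e = e1 ++ e2 ->
  wc (e1 ++ e3 ++ e2) (lift (length e1) (length e3) M) k.
Proof. induction 1; intros; subst; cbn [lift]; eauto.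
  - destruct (Nat.leb (length e1) n) eqn:E; constructor.
    + apply Nat.leb_le in E. rewrite nth_error_app2 by lia. rewrite nth_error_app2 by lia.
      rewrite nth_error_app2 in H by lia. rewrite <- H. f_equal. lia.
    + apply Nat.leb_gt in E. rewrite nth_error_app1 by lia. rewrite nth_error_app1 in H by lia. auto.
  - constructor; auto. apply (IHwc2 (0 :: e1) e2 e3); auto.
  - constructor; auto. apply (IHwc2 (0 :: e1) e2 e3); auto. Qed.

Lemma wc_lift0 : forall e M k e3, wc e M k -> wc (e3 ++ e) (lift 0 (length e3) M) k.
Proof. intros. apply (wc_lift e M k H [] e e3); auto. Qed.

Lemma wc_subst : forall e M k, wc e M k -> forall e1 j e2 N, e = e1 ++ j :: e2 -> wc e2 N j ->
  wc (e1 ++ e2) (subst_rec N M (length e1)) k.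
Proof. induction 1; intros; subst; cbn [subst_rec]; eauto.
  - destruct (Nat.ltb n (length e1)) eqn:E.
    + apply Nat.ltb_lt in E. constructor. rewrite nth_error_app1 in * by lia. auto.
    + apply Nat.ltb_ge in E. destruct (Nat.eqb n (length e1)) eqn:E2.
      * apply Nat.eqb_eq in E2. subst. rewrite nth_error_app2 in H by lia.
        rewrite Nat.sub_diag in H. simpl in H. injection H; intros; subst. apply wc_lift0; auto.
      * apply Nat.eqb_neq in E2. constructor. rewrite nth_error_app2 in * by lia.
        destruct (n - length e1) eqn:E3; [lia|]. simpl in H. rewrite <- H. f_equal. lia.
  - constructor; eauto. apply (IHwc2 (0 :: e1) j e2 N); auto.
  - constructor; eauto. apply (IHwc2 (0 :: e1) j e2 N); auto. Qed.

Ltac invwc := repeat match goal with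
  | H : wc _ (tApp _ _) _ |- _ => inversion H; subst; clear H
  | H : wc _ (tConst _) _ |- _ => inversion H; subst; clear H
  | H : wc _ (tLam _ _) _ |- _ => inversion H; subst; clear H
  | H : wc _ (tPi _ _) _ |- _ => inversion H; subst; clear H
  end.

Lemma wc_red1 : forall M N, red1 ax rl M N -> forall e k, wc e M k -> wc e N k.
Proof. induction 1; intros e k HM.
  - destruct H as [H|H]; inversion H; subst; invwc; simpl in *.
    + unfold subst. apply (wc_subst _ _ _ H7 [] 0 e); auto.
    + constructor.
    + constructor. econstructor; eauto. simpl. econstructor; eauto.
      econstructor. apply (wc_lift0 e B 0 [0]); auto. constructor; reflexivity.
  - inversion HM; subst; eauto.
  - inversion HM; subst; eauto.
  - inversion HM; subst; eauto.
  - inversion HM; subst; eauto.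
  - inversion HM; subst; eauto.
  - inversion HM; subst; eauto. Qed.

Lemma wc_red : forall M N, red ax rl M N -> forall e k, wc e M k -> wc e N k.
Proof. induction 1; eauto using wc_red1. Qed.

Lemma wc_conv : forall M N e k k', conv_betaR ax rl M N -> wc e M k -> wc e N k' -> k = k'.
Proof. intros. destruct (conv_join ax rl _ _ H) as (Q&Q1&Q2).
  apply (wc_det e Q k); [apply (wc_red M Q Q1 e k H0)|apply (wc_red N Q Q2 e k' H1)]. Qed.

Inductive wcenv : list term -> list nat -> Prop :=
| wce_nil : wcenv [] []
| wce_cons : forall G e A k, wcenv G e -> wc e A (S k) -> wcenv (A :: G) (k :: e).

Lemma wcenv_nth : forall G e, wcenv G e -> forall n A, nth_error G n = Some A ->
  exists k, nth_error e n = Some k /\ wc (skipn (S n) e) A (S k) /\ length (firstn (S n) e) = S n.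
Proof. induction 1; intros n B Hn; destruct n; simpl in *; try discriminate.
  - injection Hn; intros; subst. exists k; repeat split; auto.
  - destruct (IHwcenv _ _ Hn) as (k'&?&?&?). exists k'; repeat split; auto. Qed.

Lemma sig_wc : forall e c A, sig_decl ax rl c A -> wc e A (S (cclass c)).
Proof. intros. inversion H; subst; simpl; repeat econstructor. Qed.

Lemma class_typing : forall G M T, typing ax rl G M T -> forall e, wcenv G e ->
  exists k, wc e M k /\ ((T = tKind /\ k = 2) \/ wc e T (S k)).
Proof. induction 1; intros e He.
  - exists 2; split; auto.
  - destruct (wcenv_nth _ _ He _ _ H0) as (k&Hk1&Hk2&Hk3).
    exists k; split; auto. right. rewrite <- Hk3. rewrite <- (firstn_skipn (S n) e) at 1.
    apply wc_lift0; auto.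
  - exists (cclass c); split; auto. right; apply sig_wc; auto.
  - destruct (IHtyping1 e He) as (k1&HA&[[? ?]|HT]); [discriminate|].
    inversion HT; subst.
    assert (He' : wcenv (A :: G) (0 :: e)) by (constructor; auto).
    destruct (IHtyping2 _ He') as (k2&HB&Hs).
    destruct H1 as [->| ->].
    + destruct Hs as [[? ?]|Hs]; [discriminate|]. inversion Hs; subst. exists 1; split; auto.
    + destruct Hs as [[_ ?]|Hs]; [|inversion Hs]. subst. exists 2; split; auto.
  - destruct (IHtyping1 e He) as (k1&HP&_).
    inversion HP; subst.
    assert (He' : wcenv (A :: G) (0 :: e)) by (constructor; auto).
    destruct (IHtyping2 _ He') as (k2&HM&[[? ?]|HB]).
    + subst. exfalso; eapply wc_kind; eauto.
    + match goal with H1 : wc (0 :: e) B k1, H2 : wc (0 :: e) B (S k2) |- _ =>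
        pose proof (wc_det _ _ _ H1 _ H2) end. subst. exists k2; split; auto.
  - destruct (IHtyping1 e He) as (k1&HM&[[? ?]|HT]); [discriminate|].
    destruct (IHtyping2 e He) as (k2&HN&[[? ?]|HA]).
    + subst. inversion HT; subst. exfalso; eapply wc_kind; eauto.
    + inversion HT; subst. pose proof (wc_det _ _ _ H4 _ HA). injection H1; intros; subst.
      exists k1; split; auto. right. unfold subst. apply (wc_subst _ _ _ H6 [] 0 e); auto.
  - destruct (IHtyping1 e He) as (k1&HM&HA). destruct (IHtyping2 e He) as (k2&HB&_).
    exists k1; split; auto. right.
    destruct HA as [[? ?]|HA].
    + subst. destruct (conv_join ax rl _ _ H2) as (Q&H3&H4). apply red_kind_inv in H3. subst.
      exfalso. eapply wc_kind. eapply wc_red; eauto.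
    + pose proof (wc_conv _ _ _ _ _ H2 HA HB). subst. auto.
Qed.

End WC.

Section TY.
Context {srt : Type} (ax : srt -> srt -> Prop) (rl : srt -> srt -> srt -> Prop).
Notation term := (term srt).
Notation typing := (typing ax rl).
Notation wf := (wf ax rl).
Notation conv := (conv_betaR ax rl).
Notation red1 := (red1 ax rl).
Notation red := (red ax rl).

Scheme typing_mut := Induction for Defs.typing Sort Prop
with wf_mut := Induction for Defs.wf Sort Prop.
Combined Scheme typing_wf_mut from typing_mut, wf_mut.

Lemma conv_refl : forall M, conv M M. Proof. intros; apply rst_refl. Qed.
Lemma conv_sym : forall M N, conv M N -> conv N M. Proof. intros; apply rst_sym; auto. Qed.
Lemma conv_trans : forall M N P, conv M N -> conv N P -> conv M P.
Proof. intros; eapply rst_trans; eauto. Qed.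
Lemma red1_conv : forall M N, red1 M N -> conv M N. Proof. intros; apply rst_step; auto. Qed.

Lemma typing_wf : forall G M T, typing G M T -> wf G.
Proof. induction 1; auto. Qed.

Lemma gen_pi : forall G A B T, typing G (tPi A B) T ->
  typing G A tType /\ exists s, typing (A :: G) B s /\ is_sort srt s /\ conv s T.
Proof. intros. remember (tPi A B) as P. revert A B HeqP. induction H; intros; try discriminate.
  - injection HeqP; intros; subst. split; auto. exists s; repeat split; auto using conv_refl.
  - subst. destruct (IHtyping1 A0 B0 eq_refl) as (?&s'&?&?&?). split; auto.
    exists s'; repeat split; auto. eapply conv_trans; eauto. Qed.

Lemma gen_lam : forall G A M T, typing G (tLam A M) T ->
  exists B s, typing G (tPi A B) s /\ typing (A :: G) M B /\ conv (tPi A B) T.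
Proof. intros. remember (tLam A M) as P. revert A M HeqP. induction H; intros; try discriminate.
  - injection HeqP; intros; subst. exists B, s; repeat split; auto using conv_refl.
  - subst. destruct (IHtyping1 A0 M0 eq_refl) as (B'&s'&?&?&?).
    exists B', s'; repeat split; auto. eapply conv_trans; eauto. Qed.

Lemma gen_app : forall G M N T, typing G (tApp M N) T ->
  exists A B, typing G M (tPi A B) /\ typing G N A /\ conv (subst B N) T.
Proof. intros. remember (tApp M N) as P. revert M N HeqP. induction H; intros; try discriminate.
  - injection HeqP; intros; subst. exists A, B; repeat split; auto using conv_refl.
  - subst. destruct (IHtyping1 M0 N eq_refl) as (A'&B'&?&?&?).
    exists A', B'; repeat split; auto. eapply conv_trans; eauto. Qed.

Lemma typing_not_kind : forall G M T, typing G M T -> M <> tKind.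
Proof. induction 1; congruence. Qed.

Lemma red1_lift : forall M N, red1 M N -> forall k n, red1 (lift k n M) (lift k n N).
Proof. induction 1; intros; cbn [lift].
  - destruct H as [H|H]; inversion H; subst.
    + cbn [lift]. unfold subst. rewrite (commut_lift_subst2 N0 M0 n 0 k) by lia. rewrite Nat.sub_0_r.
      apply cc_root. left. constructor.
    + apply cc_root; right; constructor; auto.
    + cbn [lift]. replace (lift (S k) n (lift 0 1 B)) with (lift 0 1 (lift k n B))
        by (rewrite (permute_lift B n k 1 0) by lia; reflexivity).
      simpl Nat.leb. cbv iota. apply cc_root; right; constructor; auto.
  - apply cc_appl; apply IHctx_clos.
  - apply cc_appr; apply IHctx_clos.
  - apply cc_laml; apply IHctx_clos.
  - apply cc_lamr; apply IHctx_clos.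
  - apply cc_pil; apply IHctx_clos.
  - apply cc_pir; apply IHctx_clos. Qed.

Lemma red1_subst : forall M N, red1 M N -> forall P k, red1 (subst_rec P M k) (subst_rec P N k).
Proof. induction 1; intros; cbn [subst_rec].
  - destruct H as [H|H]; inversion H; subst.
    + cbn [subst_rec]. unfold subst. pose proof (distr_subst P N0 M0 k 0) as E; simpl in E; rewrite E.
      apply cc_root. left. constructor.
    + cbn [subst_rec]. apply cc_root; right; constructor; auto.
    + cbn [subst_rec]. pose proof (commut_lift_subst P B 1 k 0) as E; simpl in E; rewrite <- E by lia.
      simpl Nat.ltb. cbv iota. apply cc_root; right; constructor; auto.
  - apply cc_appl; apply IHctx_clos.
  - apply cc_appr; apply IHctx_clos.
  - apply cc_laml; apply IHctx_clos.
  - apply cc_lamr; apply IHctx_clos.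
  - apply cc_pil; apply IHctx_clos.
  - apply cc_pir; apply IHctx_clos. Qed.

Lemma conv_lift : forall M N, conv M N -> forall k n, conv (lift k n M) (lift k n N).
Proof. induction 1; intros.
  - apply red1_conv, red1_lift; auto.
  - apply conv_refl.
  - apply conv_sym; auto.
  - eapply conv_trans; eauto. Qed.

Lemma conv_subst : forall M N, conv M N -> forall P k, conv (subst_rec P M k) (subst_rec P N k).
Proof. induction 1; intros.
  - apply red1_conv, red1_subst; auto.
  - apply conv_refl.
  - apply conv_sym; auto.
  - eapply conv_trans; eauto. Qed.

Lemma red_subst_arg : forall N N', red N N' -> forall M k, red (subst_rec N M k) (subst_rec N' M k).
Proof. intros. apply red_parstar in H. induction H.
  - apply par_red. apply par_subst; auto using par_refl.
  - apply rt_refl.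
  - eapply rt_trans; eauto. Qed.

Lemma sig_closed_lift : forall c A, sig_decl ax rl c A -> forall k n, lift k n A = A.
Proof. intros. inversion H; subst; reflexivity. Qed.
Lemma sig_closed_subst : forall c A, sig_decl ax rl c A -> forall P k, subst_rec P A k = A.
Proof. intros. inversion H; subst; reflexivity. Qed.

Fixpoint lift_ctx (n : nat) (G : list term) : list term :=
  match G with [] => [] | A :: G' => lift (length G') n A :: lift_ctx n G' end.

Lemma lift_ctx_length : forall n G, length (lift_ctx n G) = length G.
Proof. induction G; simpl; auto. Qed.

Lemma lift_ctx_nth : forall n G i A, nth_error G i = Some A ->
  nth_error (lift_ctx n G) i = Some (lift (length G - S i) n A).
Proof. induction G; intros; destruct i; simpl in *; try discriminate.
  - injection H; intros; subst. f_equal. f_equal. lia.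
  - rewrite (IHG _ _ H). auto. Qed.

Lemma weakening_mut :
  (forall G M T, typing G M T -> forall G1 G0, G = G1 ++ G0 -> forall D, wf (D ++ G0) ->
     typing (lift_ctx (length D) G1 ++ D ++ G0) (lift (length G1) (length D) M) (lift (length G1) (length D) T)) /\
  (forall G, wf G -> forall G1 G0, G = G1 ++ G0 -> forall D, wf (D ++ G0) ->
     wf (lift_ctx (length D) G1 ++ D ++ G0)).
Proof.
  apply (typing_wf_mut srt ax rl
    (fun G M T _ => forall G1 G0, G = G1 ++ G0 -> forall D, wf (D ++ G0) ->
     typing (lift_ctx (length D) G1 ++ D ++ G0) (lift (length G1) (length D) M) (lift (length G1) (length D) T))
    (fun G _ => forall G1 G0, G = G1 ++ G0 -> forall D, wf (D ++ G0) ->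
     wf (lift_ctx (length D) G1 ++ D ++ G0))); intros.
  - simpl. constructor. eauto.
  - subst G. cbn [lift]. destruct (Nat.leb (length G1) n) eqn:E.
    + apply Nat.leb_le in E. rewrite nth_error_app2 in e by lia.
      rewrite (simpl_lift A (S n) 0 (length D) (length G1)) by lia.
      replace (length D + S n) with (S (n + length D)) by lia.
      constructor; auto. rewrite nth_error_app2 by (rewrite lift_ctx_length; lia).
      rewrite nth_error_app2 by (rewrite lift_ctx_length; lia). rewrite lift_ctx_length.
      rewrite <- e. f_equal. lia.
    + apply Nat.leb_gt in E. rewrite nth_error_app1 in e by lia.
      replace (lift (length G1) (length D) (lift 0 (S n) A)) with
        (lift 0 (S n) (lift (length G1 - S n) (length D) A)).
      * constructor; auto. rewrite nth_error_app1 by (rewrite lift_ctx_length; lia).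
        apply lift_ctx_nth; auto.
      * rewrite (permute_lift A (length D) (length G1 - S n) (S n) 0) by lia. f_equal. lia.
  - rewrite (sig_closed_lift _ _ s). cbn [lift]. constructor; eauto.
  - cbn [lift]. destruct i as [-> | ->]; simpl.
    + econstructor. apply (H G1 G0 H1 D H2). apply (H0 (A :: G1) G0); subst; auto. left; auto.
    + econstructor. apply (H G1 G0 H1 D H2). apply (H0 (A :: G1) G0); subst; auto. right; auto.
  - cbn [lift]. econstructor. apply (H G1 G0 H1 D H2). apply (H0 (A :: G1) G0); subst; auto.
  - unfold subst. rewrite (commut_lift_subst2 N B (length D) 0 (length G1)) by lia. rewrite Nat.sub_0_r.
    econstructor. apply (H G1 G0 H1 D H2). apply (H0 G1 G0 H1 D H2).
  - econstructor. apply (H G1 G0 H1 D H2). apply (H0 G1 G0 H1 D H2).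
    destruct i as [-> | ->]; [left|right]; reflexivity. apply conv_lift; auto.
  - destruct G1; [|discriminate]. simpl in *. subst. auto.
  - destruct G1 as [|B G1]; simpl in *.
    + subst. auto.
    + injection H0; intros; subst. simpl. econstructor. apply (H G1 G0 eq_refl D H1).
      destruct i as [-> | ->]; [left|right]; reflexivity.
Qed.

End TY.

Section TY2.
Context {srt : Type} (ax : srt -> srt -> Prop) (rl : srt -> srt -> srt -> Prop).
Notation term := (term srt).
Notation typing := (typing ax rl).
Notation wf := (wf ax rl).
Notation conv := (conv_betaR ax rl).
Notation red1 := (red1 ax rl).
Notation red := (red ax rl).

Lemma weakening : forall G M T, typing G M T -> forall D, wf (D ++ G) ->
  typing (D ++ G) (lift 0 (length D) M) (lift 0 (length D) T).
Proof. intros. apply (proj1 (weakening_mut ax rl) G M T H [] G eq_refl D H0). Qed.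

Fixpoint subst_ctx (N : term) (G : list term) : list term :=
  match G with [] => [] | A :: G' => subst_rec N A (length G') :: subst_ctx N G' end.

Lemma subst_ctx_length : forall N G, length (subst_ctx N G) = length G.
Proof. induction G; simpl; auto. Qed.

Lemma subst_ctx_nth : forall N G i A, nth_error G i = Some A ->
  nth_error (subst_ctx N G) i = Some (subst_rec N A (length G - S i)).
Proof. induction G; intros; destruct i; simpl in *; try discriminate.
  - injection H; intros; subst. f_equal. f_equal. lia.
  - rewrite (IHG _ _ H). auto. Qed.

Lemma substitution_mut : forall N A G0, typing G0 N A ->
  (forall G M T, typing G M T -> forall G1, G = G1 ++ A :: G0 ->
     typing (subst_ctx N G1 ++ G0) (subst_rec N M (length G1)) (subst_rec N T (length G1))) /\
  (forall G, wf G -> forall G1, G = G1 ++ A :: G0 -> wf (subst_ctx N G1 ++ G0)).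
Proof.
  intros N A G0 HN.
  apply (typing_wf_mut srt ax rl
    (fun G M T _ => forall G1, G = G1 ++ A :: G0 ->
     typing (subst_ctx N G1 ++ G0) (subst_rec N M (length G1)) (subst_rec N T (length G1)))
    (fun G _ => forall G1, G = G1 ++ A :: G0 -> wf (subst_ctx N G1 ++ G0))); intros.
  - simpl. constructor. eauto.
  - subst G. cbn [subst_rec]. destruct (Nat.ltb n (length G1)) eqn:E.
    + apply Nat.ltb_lt in E. rewrite nth_error_app1 in e by lia.
      replace (subst_rec N (lift 0 (S n) A0) (length G1)) with
        (lift 0 (S n) (subst_rec N A0 (length G1 - S n))).
      * constructor; eauto. rewrite nth_error_app1 by (rewrite subst_ctx_length; lia).
        apply subst_ctx_nth; auto.
      * rewrite (commut_lift_subst N A0 (S n) (length G1 - S n) 0) by lia. f_equal. lia.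
    + apply Nat.ltb_ge in E. destruct (Nat.eqb n (length G1)) eqn:E2.
      * apply Nat.eqb_eq in E2. subst n. rewrite nth_error_app2 in e by lia.
        rewrite Nat.sub_diag in e. simpl in e. injection e; intros; subst A0.
        rewrite (simpl_subst N A (length G1) (length G1) 0) by lia.
        rewrite <- (subst_ctx_length N G1). apply weakening; eauto.
      * apply Nat.eqb_neq in E2. rewrite nth_error_app2 in e by lia.
        destruct (n - length G1) eqn:E3; [lia|]. simpl in e.
        rewrite (simpl_subst N A0 n (length G1) 0) by lia.
        replace n with (S (n - 1)) at 2 by lia.
        constructor; eauto. rewrite nth_error_app2 by (rewrite subst_ctx_length; lia).
        rewrite subst_ctx_length. rewrite <- e. f_equal. lia.
  - rewrite (sig_closed_subst ax rl _ _ s). cbn [subst_rec]. constructor; eauto.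
  - cbn [subst_rec]. destruct i as [-> | ->]; simpl.
    + econstructor. apply (H G1 H1). apply (H0 (A0 :: G1)); subst; auto. left; auto.
    + econstructor. apply (H G1 H1). apply (H0 (A0 :: G1)); subst; auto. right; auto.
  - cbn [subst_rec]. econstructor. apply (H G1 H1). apply (H0 (A0 :: G1)); subst; auto.
  - unfold subst. pose proof (distr_subst N N0 B (length G1) 0) as E; simpl in E; rewrite E.
    econstructor. apply (H G1 H1). apply (H0 G1 H1).
  - econstructor. apply (H G1 H1). apply (H0 G1 H1).
    destruct i as [-> | ->]; [left|right]; reflexivity. apply conv_subst; auto.
  - destruct G1; discriminate.
  - destruct G1 as [|B G1]; simpl in *.
    + injection H0; intros; subst. eapply typing_wf; eauto.
    + injection H0; intros; subst. simpl. econstructor. apply (H G1 eq_refl).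
      destruct i as [-> | ->]; [left|right]; reflexivity.
Qed.

Lemma substitution : forall G A B M N, typing (A :: G) M B -> typing G N A ->
  typing G (subst M N) (subst B N).
Proof. intros. apply (proj1 (substitution_mut N A G H0) _ _ _ H []); auto. Qed.

End TY2.

Section TY3.
Context {srt : Type} (ax : srt -> srt -> Prop) (rl : srt -> srt -> srt -> Prop).
Notation term := (term srt).
Notation typing := (typing ax rl).
Notation wf := (wf ax rl).
Notation conv := (conv_betaR ax rl).
Notation red1 := (red1 ax rl).
Notation red := (red ax rl).

Lemma wf_nth : forall G, wf G -> forall n A, nth_error G n = Some A ->
  exists s, typing (skipn (S n) G) A s /\ is_sort srt s.
Proof. induction G; intros Hw n B Hn; destruct n; simpl in *; try discriminate.
  - injection Hn; intros; subst. inversion Hw; subst. eauto.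
  - inversion Hw; subst. apply (IHG (typing_wf _ _ _ _ _ H1) n B Hn). Qed.

Lemma sig_typable : forall G c A, wf G -> sig_decl ax rl c A -> exists s, is_sort srt s /\ typing G A s.
Proof. intros. inversion H0; subst.
  - exists tKind. split; [right; auto|]. constructor; auto.
  - exists tKind. split; [right; auto|]. econstructor. apply ty_const; auto. constructor.
    constructor. econstructor. apply ty_const; auto. constructor. left; auto. right; auto.
  - exists tType. split; [left; auto|]. apply ty_const; auto. constructor.
  - exists tType. split; [left; auto|].
    assert (HU : forall G' s, wf G' -> typing G' (tConst (Cu s)) tType) by (intros; apply ty_const; auto; constructor).
    assert (W1 : wf (tConst (Cu s1) :: G)) by (econstructor; eauto; left; auto).
    assert (HE : typing (tConst (Cu s1) :: G) (tApp (tConst (Ceps s1)) (tVar 0)) tType).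
    { change tType with (subst (srt:=srt) tType (tVar 0)). econstructor.
      apply ty_const; auto. constructor.
      change (tConst (Cu s1)) with (lift 0 1 (tConst (srt:=srt) (Cu s1))) at 2. constructor; auto. }
    assert (W2 : wf (tApp (tConst (Ceps s1)) (tVar 0) :: tConst (Cu s1) :: G)) by (econstructor; eauto; left; auto).
    assert (HP : typing (tConst (Cu s1) :: G) (tPi (tApp (tConst (Ceps s1)) (tVar 0)) (tConst (Cu s2))) tType).
    { econstructor; eauto. left; auto. }
    assert (W3 : wf (tPi (tApp (tConst (Ceps s1)) (tVar 0)) (tConst (Cu s2)) :: tConst (Cu s1) :: G)) by (econstructor; eauto; left; auto).
    econstructor; eauto. econstructor; eauto. left; auto. left; auto. Qed.

Lemma type_correct : forall G M T, typing G M T -> T = tKind \/ exists s, is_sort srt s /\ typing G T s.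
Proof. induction 1.
  - left; auto.
  - right. destruct (wf_nth G H n A H0) as (s&Hs&Hsort).
    exists s. split; auto. assert (E : lift 0 (S n) s = s) by (destruct Hsort; subst; reflexivity).
    assert (HL : length (firstn (S n) G) = S n).
    { rewrite firstn_length_le; auto. apply nth_error_Some. congruence. }
    pose proof (weakening ax rl _ _ _ Hs (firstn (S n) G)) as W.
    rewrite firstn_skipn, HL in W. rewrite <- E. apply W; auto.
  - right. eapply sig_typable; eauto.
  - match goal with Hs : is_sort _ _ |- _ => destruct Hs; subst end; [right; exists tKind; split; [right; auto|]; constructor; eapply typing_wf; eauto|left; auto].
  - right. apply gen_pi in H. destruct H as (HA&s'&HB&Hs'&_). exists s'; split; auto.
    econstructor; eauto.
  - right. destruct IHtyping1 as [?|(s&_&Hs)]; [discriminate|].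
    apply gen_pi in Hs. destruct Hs as (_&s'&HB&Hs'&_).
    exists s'. split; auto. assert (E : subst s' N = s') by (destruct Hs'; subst; reflexivity).
    rewrite <- E. eapply substitution; eauto.
  - right; eauto. Qed.

Lemma app_type_typable : forall G M N A B, typing G M (tPi A B) -> typing G N A ->
  exists s, is_sort srt s /\ typing G (subst B N) s.
Proof. intros. destruct (type_correct _ _ _ (ty_app srt ax rl G M N A B H H0)) as [E|?]; auto.
  destruct (type_correct _ _ _ H) as [?|(s&_&Hs)]; [discriminate|].
  apply gen_pi in Hs. destruct Hs as (_&s'&HB&_).
  unfold subst in E. destruct B; simpl in E; try discriminate.
  - exfalso; eapply (typing_not_kind ax rl); [exact HB|reflexivity].
  - destruct n; simpl in E; try discriminate. rewrite lift_0 in E. subst.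
    exfalso; eapply (typing_not_kind ax rl); [exact H0|reflexivity]. Qed.

Lemma ctx_conv_mut : forall A A' G0 s, conv A A' -> typing G0 A' s -> is_sort srt s ->
  (forall G M T, typing G M T -> forall G1, G = G1 ++ A :: G0 -> typing (G1 ++ A' :: G0) M T) /\
  (forall G, wf G -> forall G1, G = G1 ++ A :: G0 -> wf (G1 ++ A' :: G0)).
Proof.
  intros A A' G0 s0 HAA HA' Hs0.
  apply (typing_wf_mut srt ax rl
    (fun G M T _ => forall G1, G = G1 ++ A :: G0 -> typing (G1 ++ A' :: G0) M T)
    (fun G _ => forall G1, G = G1 ++ A :: G0 -> wf (G1 ++ A' :: G0))); intros.
  - constructor; eauto.
  - subst G. destruct (Nat.eq_dec n (length G1)).
    + subst n. rewrite nth_error_app2 in e by lia. rewrite Nat.sub_diag in e. simpl in e.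
      injection e; intros; subst A0.
      assert (Wn : wf (G1 ++ A' :: G0)) by eauto.
      destruct (wf_nth _ w (length G1) A) as (sA&HsA&HsAs).
      { rewrite nth_error_app2 by lia. rewrite Nat.sub_diag; auto. }
      apply ty_conv with (lift 0 (S (length G1)) A') (lift 0 (S (length G1)) sA).
      * constructor; auto. rewrite nth_error_app2 by lia. rewrite Nat.sub_diag; auto.
      * replace (skipn (S (length G1)) (G1 ++ A :: G0)) with G0 in HsA.
        2:{ rewrite skipn_app. replace (S (length G1) - length G1) with 1 by lia.
            rewrite skipn_all2 by lia. reflexivity. }
        replace (S (length G1)) with (length (G1 ++ [A'])) by (rewrite length_app; simpl; lia).
        replace (G1 ++ A' :: G0) with ((G1 ++ [A']) ++ G0) in Wn |- * by (rewrite <- app_assoc; reflexivity). apply weakening; auto.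
      * destruct HsAs; subst; [left|right]; reflexivity.
      * apply conv_lift; apply conv_sym; auto.
    + constructor; eauto. destruct (Nat.lt_ge_cases n (length G1)).
      * rewrite nth_error_app1 in * by lia. auto.
      * rewrite nth_error_app2 in * by lia. destruct (n - length G1) eqn:E; [lia|]. auto.
  - constructor; eauto.
  - econstructor; eauto. apply (H0 (A0 :: G1)); subst; auto.
  - econstructor; eauto. apply (H0 (A0 :: G1)); subst; auto.
  - econstructor; eauto.
  - econstructor; eauto.
  - destruct G1; discriminate.
  - destruct G1 as [|B G1]; simpl in *.
    + injection H0; intros; subst. econstructor; eauto.
    + injection H0; intros; subst. econstructor; eauto.
Qed.

Lemma ctx_conv : forall G A A' M T s, typing (A :: G) M T -> conv A A' -> typing G A' s -> is_sort srt s ->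
  typing (A' :: G) M T.
Proof. intros. apply (proj1 (ctx_conv_mut A A' G s H0 H1 H2) _ _ _ H []); auto. Qed.

End TY3.

Section SR.
Context {srt : Type} (ax : srt -> srt -> Prop) (rl : srt -> srt -> srt -> Prop).
Notation term := (term srt).
Notation typing := (typing ax rl).
Notation wf := (wf ax rl).
Notation conv := (conv_betaR ax rl).
Notation red1 := (red1 ax rl).
Notation red := (red ax rl).

Lemma beta1_red1 : forall M N, beta1 M N -> red1 M N.
Proof. induction 1.
  - apply cc_root. left; auto.
  - apply cc_appl; auto.
  - apply cc_appr; auto.
  - apply cc_laml; auto.
  - apply cc_lamr; auto.
  - apply cc_pil; auto.
  - apply cc_pir; auto. Qed.

Lemma beta1_conv : forall M N, beta1 M N -> conv M N.
Proof. intros. apply rst_step. apply beta1_red1; auto. Qed.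

Lemma SR1 : forall G M T, typing G M T -> forall M', beta1 M M' -> typing G M' T.
Proof. induction 1; intros M' Hr.
  - inversion Hr; subst. inversion H0.
  - inversion Hr; subst. inversion H1.
  - inversion Hr; subst. inversion H1.
  - inversion Hr; subst.
    + inversion H2.
    + econstructor; eauto. eapply ctx_conv; eauto. apply beta1_conv; auto. left; auto.
    + econstructor; eauto.
  - inversion Hr; subst.
    + inversion H1.
    + assert (HP : typing G (tPi A' B) s) by (apply IHtyping1; apply cc_pil; auto).
      destruct (gen_pi ax rl _ _ _ _ HP) as (HA'&_).
      destruct (gen_pi ax rl _ _ _ _ H) as (HA&s'&HB&Hs'&_).
      apply ty_conv with (tPi A' B) s'; auto.
      * econstructor; eauto. eapply ctx_conv; eauto. apply beta1_conv; auto. left; auto.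
      * econstructor; eauto.
      * apply conv_sym. apply beta1_conv. apply cc_pil; auto.
    + econstructor; eauto.
  - inversion Hr; subst.
    + match goal with Hh : head_beta _ _ |- _ => inversion Hh; subst end.
      destruct (app_type_typable ax rl _ _ _ _ _ H H0) as (s'&Hs'&HT).
      apply gen_lam in H. destruct H as (D&s&HP&HM&Hc).
      apply conv_pi_inj in Hc. destruct Hc as (HcA&HcB).
      destruct (gen_pi ax rl _ _ _ _ HP) as (HA0&_).
      apply ty_conv with (subst D N) s'; auto.
      * eapply substitution; eauto. apply ty_conv with A tType; auto. left; auto. apply conv_sym; auto.
      * apply conv_subst; auto.
    + econstructor; eauto.
    + destruct (app_type_typable ax rl _ _ _ _ _ H H0) as (s'&Hs'&HT).
      apply ty_conv with (subst B N') s'; auto.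
      * econstructor; eauto.
      * apply conv_sym. apply red_conv. apply red_subst_arg. apply rt_step. apply beta1_red1; auto.
  - apply ty_conv with A s; auto.
Qed.

Lemma SR : forall M M', beta_star M M' -> forall G T, typing G M T -> typing G M' T.
Proof. induction 1; intros; eauto using SR1. Qed.

End SR.

Section NR.
Context {srt : Type} (ax : srt -> srt -> Prop) (rl : srt -> srt -> srt -> Prop).
Notation term := (term srt).
Notation wc := (@wc srt).

Inductive nr : list nat -> term -> Prop :=
| nr_type : forall e, nr e tType
| nr_kind : forall e, nr e tKind
| nr_var : forall e n, nr e (tVar n)
| nr_const : forall e c, nr e (tConst c)
| nr_app : forall e M N, nr e M -> nr e N ->
    (forall B C, M = tLam B C -> ~ wc e M 1) -> nr e (tApp M N)
| nr_lam : forall e A M, nr e A -> nr (0 :: e) M -> nr e (tLam A M)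
| nr_pi : forall e A M, nr e A -> nr (0 :: e) M -> nr e (tPi A M).
Hint Constructors nr : core.

Lemma nr_lift : forall e M k, wc e M k -> forall e1 e2 e3, e = e1 ++ e2 -> nr e M ->
  nr (e1 ++ e3 ++ e2) (lift (length e1) (length e3) M).
Proof. induction 1; intros e1 e2 e3 He Hn; subst; cbn [lift]; inversion Hn; subst; auto.
  - destruct (Nat.leb (length e1) n); auto.
  - constructor; eauto. intros B C E HC.
    destruct M; cbn [lift] in E; try discriminate.
    + destruct (Nat.leb (length e1) n); discriminate.
    + pose proof (wc_lift _ _ _ H e1 e2 e3 eq_refl) as HW.
      pose proof (wc_det _ _ _ HW _ HC). subst. eapply H6; eauto.
  - constructor; eauto. apply (IHwc2 (0 :: e1) e2 e3); auto.
  - constructor; eauto. apply (IHwc2 (0 :: e1) e2 e3); auto. Qed.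

Lemma subst_lam_inv : forall (N C : term) j B' C', subst_rec N C j = tLam B' C' ->
  (exists B C0, C = tLam B C0) \/ C = tVar j.
Proof. intros. destruct C; cbn [subst_rec] in H; try discriminate; eauto.
  destruct (Nat.ltb n j) eqn:E1; try discriminate. destruct (Nat.eqb n j) eqn:E2; try discriminate.
  apply Nat.eqb_eq in E2; subst; auto. Qed.

Lemma nr_subst : forall e C k, wc e C k -> forall e1 e2 N, e = e1 ++ 0 :: e2 -> nr e C ->
  nr e2 N -> wc e2 N 0 -> nr (e1 ++ e2) (subst_rec N C (length e1)).
Proof. induction 1; intros e1 e2 N0 He Hn HN HwN; subst; cbn [subst_rec]; inversion Hn; subst; auto.
  - destruct (Nat.ltb n (length e1)); auto. destruct (Nat.eqb n (length e1)); auto.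
    apply (nr_lift _ _ _ HwN [] e2 e1); auto.
  - constructor; eauto. intros B C E HC.
    destruct (subst_lam_inv _ _ _ _ _ E) as [(B0&C0&->) | ->].
    + pose proof (wc_subst _ _ _ H e1 0 e2 N0 eq_refl HwN) as HW.
      pose proof (wc_det _ _ _ HW _ HC). subst. eapply H6; eauto.
    + pose proof (wc_subst _ _ _ H e1 0 e2 N0 eq_refl HwN) as HW0.
      inversion H; subst. rewrite nth_error_app2 in H4 by lia. rewrite Nat.sub_diag in H4.
      simpl in H4. injection H4; intros; subst.
      pose proof (wc_subst _ _ _ H e1 0 e2 N0 eq_refl HwN) as HW.
      pose proof (wc_det _ _ _ HW _ HC). discriminate.
  - constructor; eauto. apply (IHwc2 (0 :: e1) e2 N0); auto.
  - constructor; eauto. apply (IHwc2 (0 :: e1) e2 N0); auto. Qed.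

Lemma beta_star_app : forall M M' N N' : term, beta_star M M' -> beta_star N N' -> beta_star (tApp M N) (tApp M' N').
Proof. intros. apply rt_trans with (tApp M' N).
  - induction H. apply rt_step; apply cc_appl; auto. apply rt_refl. eapply rt_trans; eauto.
  - induction H0. apply rt_step; apply cc_appr; auto. apply rt_refl. eapply rt_trans; eauto. Qed.
Lemma beta_star_lam : forall M M' N N' : term, beta_star M M' -> beta_star N N' -> beta_star (tLam M N) (tLam M' N').
Proof. intros. apply rt_trans with (tLam M' N).
  - induction H. apply rt_step; apply cc_laml; auto. apply rt_refl. eapply rt_trans; eauto.
  - induction H0. apply rt_step; apply cc_lamr; auto. apply rt_refl. eapply rt_trans; eauto. Qed.
Lemma beta_star_pi : forall M M' N N' : term, beta_star M M' -> beta_star N N' -> beta_star (tPi M N) (tPi M' N').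
Proof. intros. apply rt_trans with (tPi M' N).
  - induction H. apply rt_step; apply cc_pil; auto. apply rt_refl. eapply rt_trans; eauto.
  - induction H0. apply rt_step; apply cc_pir; auto. apply rt_refl. eapply rt_trans; eauto. Qed.

Lemma beta_star_red : forall M N : term, beta_star M N -> red ax rl M N.
Proof. induction 1. apply rt_step. apply beta1_red1; auto. apply rt_refl. eapply rt_trans; eauto. Qed.

Lemma normalize : forall e M k, wc e M k -> exists M', beta_star M M' /\ nr e M'.
Proof. induction 1.
  - exists tType; split; auto. apply rt_refl.
  - exists (tVar n); split; auto. apply rt_refl.
  - exists (tConst c); split; auto. apply rt_refl.
  - destruct IHwc1 as (M1&HM1&HnM1). destruct IHwc2 as (N1&HN1&HnN1).
    assert (W1 : wc e M1 k) by (eapply wc_red; [apply beta_star_red|]; eauto).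
    assert (W2 : wc e N1 0) by (eapply wc_red; [apply beta_star_red|]; eauto).
    assert (Hdec : (exists B C, M1 = tLam B C) \/ forall B C, M1 <> tLam B C)
      by (destruct M1; eauto; right; intros; discriminate).
    destruct Hdec as [(B&C&->)|Hd].
    2:{ exists (tApp M1 N1); split; [apply beta_star_app; auto| constructor; auto].
        intros. exfalso; eapply Hd; eauto. }
    destruct (Nat.eq_dec k 1).
    + subst. exists (subst C N1). split.
      * eapply rt_trans. apply beta_star_app; eauto. apply rt_step. apply cc_root. constructor.
      * inversion HnM1; subst. inversion W1; subst.
        match goal with Hw : wc (0 :: e) C 1 |- _ => apply (nr_subst _ _ _ Hw [] e N1); auto end.
    + exists (tApp (tLam B C) N1). split; [apply beta_star_app; auto|]. constructor; auto.
      intros. intro HC. pose proof (wc_det _ _ _ W1 _ HC); auto.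
  - destruct IHwc1 as (A1&?&?). destruct IHwc2 as (M1&?&?).
    exists (tLam A1 M1); split; auto. apply beta_star_lam; auto.
  - destruct IHwc1 as (A1&?&?). destruct IHwc2 as (M1&?&?).
    exists (tPi A1 M1); split; auto. apply beta_star_pi; auto. Qed.

End NR.

Lemma subterm_nr : forall srt (G : ctx srt) M D P, subterm_in srt G M D P ->
  forall e k, wcenv G e -> wc e M k -> nr e M ->
  exists e' k', wcenv D e' /\ wc e' P k' /\ nr e' P.
Proof. induction 1; intros e k He Hw Hn.
  - eauto.
  - inversion Hw; inversion Hn; subst; eauto.
  - inversion Hw; inversion Hn; subst; eauto.
  - inversion Hw; inversion Hn; subst; eauto.
  - inversion Hw; inversion Hn; subst. apply (IHsubterm_in (0 :: e) k); auto. constructor; auto.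
  - inversion Hw; inversion Hn; subst; eauto.
  - inversion Hw; inversion Hn; subst. apply (IHsubterm_in (0 :: e) k); auto. constructor; auto.
Qed.

Lemma wf_wcenv : forall srt ax rl (G : ctx srt), wf ax rl G -> exists e, wcenv G e.
Proof. induction G; intros.
  - exists []; constructor.
  - inversion H; subst. destruct (IHG (typing_wf ax rl _ _ _ H2)) as (e&He).
    destruct (class_typing ax rl _ _ _ H2 e He) as (k&Hk&[[? ?]|Hs]).
    + subst. exists (1 :: e). constructor; auto.
    + destruct H3; subst; inversion Hs; subst.
      * exists (0 :: e). constructor; auto.
Qed.

Theorem lemma5p3 (srt : Type) (ax : srt -> srt -> Prop)
    (rl : srt -> srt -> srt -> Prop) (Hfun : functional_spec ax rl)
    (G : ctx srt) (M A : term srt)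
    (HG : wf ax rl G) (HM : typing ax rl G M A) :
  exists M' : term srt, beta_star M M' /\ lamPiMinus_term ax rl G M'.
Proof.
  destruct (wf_wcenv srt ax rl G HG) as (e&He).
  destruct (class_typing ax rl _ _ _ HM e He) as (k&Hk&_).
  destruct (normalize ax rl e M k Hk) as (M'&Hr&Hn).
  exists M'. split; auto. split.
  - exists A. eapply SR; eauto.
  - intros (D&B&C&P&Hsub&(C'&HR&HC)).
    assert (Hk' : wc e M' k) by (eapply wc_red; [apply (beta_star_red ax rl); eauto| auto]).
    destruct (subterm_nr _ _ _ _ _ Hsub e k He Hk' Hn) as (e'&k'&He'&Hw'&Hn').
    destruct (class_typing ax rl _ _ _ HC e' He') as (k1&Hk1&[[_ ?]|Hbad]).
    2:{ eapply wc_kind; eauto. }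
    subst k1.
    destruct (class_typing ax rl _ _ _ HR e' He') as (k2&Hk2&[[? _]|HC2]).
    + subst. eapply (typing_not_kind ax rl); [exact HC|reflexivity].
    + pose proof (wc_det _ _ _ Hk1 _ HC2). injection H; intros; subst k2.
      inversion Hn'; subst. eapply H5; [reflexivity|]. inversion Hk2; subst. auto.
Qed.
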